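(* Every graphing is a modeling. That is, let $V$ be a standard Borel space with a probability measure $\mu$ and let $T_1,\dots,T_k$ be measure-preserving Borel involutions of $V$; let $\mathbf G$ be the graph on $V$ in which distinct $x,y$ are adjacent iff $T_j(x)=y$ for some $1\le j\le k$. Then $\mathbf G$ (with the Borel $\sigma$-algebra of $V$) is a relational sample space, and hence $(\mathbf G,\mu)$ is a modeling.
   Context: A relational sample space is a graph (or relational structure) whose domain is a standard Borel space such that for every $p$ and every first-order formula $\phi$ with free variables among $x_1,\dots,x_p$, the set $\{(v_1,\dots,v_p)\in V^p:\mathbf G\models\phi(v_1,\dots,v_p)\}$ is measurable with respect to the product $\sigma$-algebra of $V^p$. A modeling is a relational sample space equipped with a probability measure. *)

(* Defs.v *)
From HB Require Import structures.
From mathcomp Require Import all_boot all_order all_algebra.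
From mathcomp Require Import all_classical all_reals all_analysis.
Set Implicit Arguments. Unset Strict Implicit. Unset Printing Implicit Defensive.
Import Order.TTheory GRing.Theory Num.Theory.
Local Open Scope classical_set_scope.
Local Open Scope ring_scope.

(** A measurable space is standard Borel if its sigma-algebra is the Borel
   sigma-algebra of some Polish topology, i.e. of the topology induced by a
   complete separable metric. *)
Section StdBorel.
Variables (R : realType) (V : Type).

Definition is_metric (dist : V -> V -> R) :=
  [/\ forall x y, 0 <= dist x y,
      forall x y, dist x y = 0 <-> x = y,
      forall x y, dist x y = dist y x &
      forall x y z, dist x z <= dist x y + dist y z].

Definition metric_open (dist : V -> V -> R) : set (set V) :=
  [set U | forall x, U x -> exists2 e : R, 0 < e & [set y | dist x y < e] `<=` U].

Definition metric_cauchy (dist : V -> V -> R) (u : nat -> V) :=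
  forall e : R, 0 < e -> exists N, forall m n, (N <= m)%N -> (N <= n)%N ->
    dist (u m) (u n) < e.

Definition metric_converges (dist : V -> V -> R) (u : nat -> V) (x : V) :=
  forall e : R, 0 < e -> exists N, forall n, (N <= n)%N -> dist (u n) x < e.

Definition metric_complete (dist : V -> V -> R) :=
  forall u, metric_cauchy dist u -> exists x, metric_converges dist u x.

Definition metric_separable (dist : V -> V -> R) :=
  exists D : set V, countable D /\
    forall x (e : R), 0 < e -> exists y, D y /\ dist x y < e.

End StdBorel.

Definition standard_borel (R : realType) (d : measure_display)
  (V : measurableType d) :=
  exists dist : V -> V -> R,
    [/\ is_metric dist, metric_complete dist, metric_separable dist &
        forall A : set V, measurable A <-> <<s metric_open dist >> A].

Definition prod_measurable (d : measure_display) (V : measurableType d)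
  (p : nat) : set (set ('I_p -> V)) :=
  <<s [set S | exists (i : 'I_p) (A : set V),
                 measurable A /\ S = [set v | A (v i)]] >>.

(** * First-order formulas in the language of graphs (one binary relation),
    variables in de Bruijn style: variable [i] refers to the [i]-th entry of
    the environment; quantifiers push a new entry in front. *)
Inductive formula :=
  | FTrue | FFalse
  | FEq of nat & nat
  | FAdj of nat & nat
  | FNot of formula
  | FAnd of formula & formula
  | FOr of formula & formula
  | FImp of formula & formula
  | FEx of formula
  | FAll of formula.

Fixpoint sat (V : Type) (E : V -> V -> Prop) (env : seq V) (f : formula)
  : Prop :=
  match f with
  | FTrue => True
  | FFalse => False
  | FEq i j => match onth env i, onth env j with
               | Some x, Some y => x = y | _, _ => False end
  | FAdj i j => match onth env i, onth env j with
               | Some x, Some y => E x y | _, _ => False end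
  | FNot g => ~ sat E env g
  | FAnd g h => sat E env g /\ sat E env h
  | FOr g h => sat E env g \/ sat E env h
  | FImp g h => sat E env g -> sat E env h
  | FEx g => exists x, sat E (x :: env) g
  | FAll g => forall x, sat E (x :: env) g
  end.

Fixpoint fv_below (f : formula) (n : nat) : bool :=
  match f with
  | FTrue | FFalse => true
  | FEq i j | FAdj i j => (i < n)%N && (j < n)%N
  | FNot g => fv_below g n
  | FAnd g h | FOr g h | FImp g h => fv_below g n && fv_below h n
  | FEx g | FAll g => fv_below g n.+1
  end.

Definition definable_set (d : measure_display) (V : measurableType d)
  (E : V -> V -> Prop) (p : nat) (f : formula) : set ('I_p -> V) :=
  [set v | sat E [seq v i | i <- enum 'I_p] f].

Definition relational_sample_space (R : realType) (d : measure_display)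
  (V : measurableType d) (E : V -> V -> Prop) :=
  standard_borel R V /\
  forall (p : nat) (f : formula), fv_below f p ->
    @prod_measurable d V p (@definable_set d V E p f).

Definition modeling (R : realType) (d : measure_display)
  (V : measurableType d) (E : V -> V -> Prop) (mu : probability V R) :=
  relational_sample_space R E.

Definition measure_preserving_involution (R : realType) (d : measure_display)
  (V : measurableType d) (mu : probability V R) (T : V -> V) :=
  [/\ measurable_fun setT T,
      forall x, T (T x) = x &
      forall A : set V, measurable A -> mu (T @^-1` A) = mu A].

Definition graphing_adj (V : Type) (k : nat) (T : 'I_k -> V -> V) (x y : V) :=
  x <> y /\ exists j : 'I_k, T j x = y.

(* Main.v *)
Require Import Defs.
From HB Require Import structures.
From mathcomp Require Import all_boot all_order all_algebra.
From mathcomp Require Import all_classical all_reals all_analysis.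
From Stdlib Require Import Classical.
Set Implicit Arguments. Unset Strict Implicit. Unset Printing Implicit Defensive.
Local Open Scope classical_set_scope.

Section Core.
Variables (d : measure_display) (V : measurableType d).

Definition Wf (f : V -> V) := measurable_fun setT f /\
  exists h, measurable_fun setT h /\ cancel f h /\ cancel h f.

Lemma pre_meas (f : V -> V) (A : set V) :
  measurable_fun setT f -> measurable A -> measurable (f @^-1` A).
Proof. by move=> mf mA; rewrite -(setTI (f @^-1` A)); exact: mf measurableT A mA. Qed.

Lemma Wf_comp f g : Wf f -> Wf g -> Wf (f \o g).
Proof.
move=> [mf [hf [mhf [c1 c2]]]] [mg [hg [mhg [c3 c4]]]]; split.
  exact: measurableT_comp.
exists (hg \o hf); split; first exact: measurableT_comp.
by split=> x /=; rewrite ?c1 ?c3 ?c4 ?c2.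
Qed.

Lemma Wf_inv f : Wf f -> exists h, Wf h /\ forall x y, (f x = y <-> x = h y).
Proof.
move=> [mf [h [mh [c1 c2]]]]; exists h; split.
  by split=> //; exists f.
by move=> x y; split=> [<-|->]; rewrite ?c1 ?c2.
Qed.

Lemma Wf_id : Wf id.
Proof. by split; [exact: measurable_id | exists id]. Qed.

Hypothesis hsep : exists S : nat -> nat -> set V,
  (forall m r, measurable (S m r)) /\
  forall x y, (forall m r, S m r x -> S m r y) -> x = y.

Lemma meas_eq (f g : V -> V) : measurable_fun setT f -> measurable_fun setT g ->
  measurable [set y | f y = g y].
Proof.
move=> mf mg; have [S [mS sep]] := hsep.
have -> : [set y | f y = g y] =
  \bigcap_m \bigcap_r (~` (f @^-1` S m r) `|` g @^-1` S m r).
  apply/seteqP; split=> y /=.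
    move=> e m _ r _ /=; rewrite e.
    by case: (classic (S m r (g y))) => h; [right|left].
  move=> h; apply: sep => m r hs; have := h m I r I; case=> //.
apply: bigcapT_measurable => m; apply: bigcapT_measurable => r.
by apply: measurableU; [apply: measurableC|]; apply: pre_meas.
Qed.

Lemma meas_set1 (b : V) : measurable [set b].
Proof.
have := @meas_eq id (cst b) (@measurable_id _ _ setT) (measurable_cst b).
by [].
Qed.

Inductive bexp := BT | BF | BA of nat & set V | BE of nat & nat & (V -> V) & (V -> V)
 | BN of bexp | BC of bexp & bexp | BD of bexp & bexp.

Fixpoint eval (e : nat -> V) (b : bexp) : Prop :=
  match b with
  | BT => True | BF => False
  | BA i A => A (e i)
  | BE i j f g => f (e i) = g (e j)
  | BN b => ~ eval e b
  | BC b1 b2 => eval e b1 /\ eval e b2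
  | BD b1 b2 => eval e b1 \/ eval e b2
  end.

Fixpoint wf (n : nat) (b : bexp) : Prop :=
  match b with
  | BT | BF => True
  | BA i A => (i < n)%N /\ measurable A
  | BE i j f g => [/\ (i < n)%N, (j < n)%N, Wf f & Wf g]
  | BN b => wf n b
  | BC b1 b2 | BD b1 b2 => wf n b1 /\ wf n b2
  end.

Definition scons (x : V) (e : nat -> V) : nat -> V :=
  fun i => if i is i'.+1 then e i' else x.

Inductive tree := Leaf of set V | NE of bexp & tree & tree
  | NX of nat & (V -> V) & tree & tree.

Fixpoint evalT (x : V) (e : nat -> V) (t : tree) : Prop :=
  match t with
  | Leaf B => B x
  | NE c t1 t2 => (eval e c /\ evalT x e t1) \/ (~ eval e c /\ evalT x e t2)
  | NX j g t1 t2 => (x = g (e j) /\ evalT x e t1) \/ (x <> g (e j) /\ evalT x e t2)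
  end.

Fixpoint wfT (n : nat) (t : tree) : Prop :=
  match t with
  | Leaf B => measurable B
  | NE c t1 t2 => [/\ wf n c, wfT n t1 & wfT n t2]
  | NX j g t1 t2 => [/\ (j < n)%N, Wf g, wfT n t1 & wfT n t2]
  end.

Fixpoint graft (t : tree) (h : set V -> tree) : tree :=
  match t with
  | Leaf B => h B
  | NE c t1 t2 => NE c (graft t1 h) (graft t2 h)
  | NX j g t1 t2 => NX j g (graft t1 h) (graft t2 h)
  end.

Lemma evalT_graft x e t h (Q : Prop -> Prop) :
  (forall P1 P2 : Prop, (P1 <-> P2) -> (Q P1 <-> Q P2)) ->
  (forall B, evalT x e (h B) <-> Q (B x)) ->
  (evalT x e (graft t h) <-> Q (evalT x e t)).
Proof.
move=> hQ hh; elim: t => [B|c t1 IH1 t2 IH2|j g t1 IH1 t2 IH2] /=.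
- exact: hh.
- case: (classic (eval e c)) => hc.
  + rewrite -/(evalT x e (graft t1 h)).
    have E1 : ((eval e c /\ evalT x e t1) \/ (~ eval e c /\ evalT x e t2)) <-> evalT x e t1 by tauto.
    rewrite (hQ _ _ E1) -IH1; tauto.
  + have E1 : ((eval e c /\ evalT x e t1) \/ (~ eval e c /\ evalT x e t2)) <-> evalT x e t2 by tauto.
    rewrite (hQ _ _ E1) -IH2; tauto.
- case: (classic (x = g (e j))) => hc.
  + have E1 : ((x = g (e j) /\ evalT x e t1) \/ (x <> g (e j) /\ evalT x e t2)) <-> evalT x e t1 by tauto.
    rewrite (hQ _ _ E1) -IH1; tauto.
  + have E1 : ((x = g (e j) /\ evalT x e t1) \/ (x <> g (e j) /\ evalT x e t2)) <-> evalT x e t2 by tauto.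
    rewrite (hQ _ _ E1) -IH2; tauto.
Qed.

Lemma wfT_graft n t h : wfT n t -> (forall B, measurable B -> wfT n (h B)) ->
  wfT n (graft t h).
Proof.
move=> + hh; elim: t => [B|c t1 IH1 t2 IH2|j g t1 IH1 t2 IH2] /=.
- exact: hh.
- by case=> ? ? ?; split; auto.
- by case=> ? ? ? ?; split; auto.
Qed.


Definition mapL (h : set V -> set V) t := graft t (fun B => Leaf (h B)).


Lemma toTree b n : wf n.+1 b ->
  exists t, wfT n t /\ forall x e, eval (scons x e) b <-> evalT x e t.
Proof.
elim: b n => [||i A|i j f g|b IH|b1 IH1 b2 IH2|b1 IH1 b2 IH2] n /=.
- by move=> _; exists (Leaf setT); split; [exact: measurableT|].
- by move=> _; exists (Leaf set0); split; [exact: measurable0|].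
- move=> [hi mA]; case: i hi => [|i] hi.
    by exists (Leaf A).
  exists (NE (BA i A) (Leaf setT) (Leaf set0)); split=> /=.
    by split=> //; split.
  move=> x e /=; rewrite /setT /set0 /=; tauto.
- case=> hi hj wff wfg; case: i hi => [|i] hi; case: j hj => [|j] hj.
  + exists (Leaf [set y | f y = g y]); split=> //.
    exact: meas_eq (proj1 wff) (proj1 wfg).
  + have [hf [wfh hfE]] := Wf_inv wff.
    exists (NX j (hf \o g) (Leaf setT) (Leaf set0)); split=> /=.
      by split=> //; exact: Wf_comp.
    move=> x e /=; rewrite hfE; rewrite /setT /set0 /=; tauto.
  + have [hg [wfh hgE]] := Wf_inv wfg.
    exists (NX i (hg \o f) (Leaf setT) (Leaf set0)); split=> /=.
      by split=> //; exact: Wf_comp.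
    move=> x e /=; have -> : (f (e i) = g x) <-> (g x = f (e i)) by split=> ->.
    rewrite hgE; rewrite /setT /set0 /=; tauto.
  + exists (NE (BE i j f g) (Leaf setT) (Leaf set0)); split=> /=.
      by split=> //; split.
    move=> x e /=; rewrite /setT /set0 /=; tauto.
- move=> /IH [t [wt ht]]; exists (mapL setC t); split.
    by apply: wfT_graft => // B mB; exact: measurableC.
  move=> x e; rewrite ht; rewrite (@evalT_graft x e t _ (fun P => ~ P)) //.
  by move=> P1 P2 E; rewrite E.
- move=> [/IH1 [t1 [w1 h1]] /IH2 [t2 [w2 h2]]].
  exists (graft t1 (fun B => mapL (setI B) t2)); split.
    apply: wfT_graft => // B mB; apply: wfT_graft => // B' mB'.
    exact: measurableI.
  move=> x e; rewrite h1 h2.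
  rewrite (@evalT_graft x e t1 _ (fun P => P /\ evalT x e t2)).
  + by [].
  + by move=> P1 P2 E; rewrite E.
  + move=> B; rewrite (@evalT_graft x e t2 _ (fun P => B x /\ P)) //.
    by move=> P1 P2 E; rewrite E.
- move=> [/IH1 [t1 [w1 h1]] /IH2 [t2 [w2 h2]]].
  exists (graft t1 (fun B => mapL (setU B) t2)); split.
    apply: wfT_graft => // B mB; apply: wfT_graft => // B' mB'.
    exact: measurableU.
  move=> x e; rewrite h1 h2.
  rewrite (@evalT_graft x e t1 _ (fun P => P \/ evalT x e t2)).
  + by [].
  + by move=> P1 P2 E; rewrite E.
  + move=> B; rewrite (@evalT_graft x e t2 _ (fun P => B x \/ P)) //.
    by move=> P1 P2 E; rewrite E.
Qed.


Fixpoint excl (x : V) (e : nat -> V) (ts : seq (nat * (V -> V))) : Prop :=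
  match ts with [::] => True | p :: ts => x <> p.2 (e p.1) /\ excl x e ts end.

Fixpoint wfts n (ts : seq (nat * (V -> V))) : Prop :=
  match ts with [::] => True | p :: ts => ((p.1 < n)%N /\ Wf p.2) /\ wfts n ts end.

Fixpoint orS {A : eqType} (F : A -> bexp) (s : seq A) : bexp :=
  match s with [::] => BF | y :: s => BD (F y) (orS F s) end.

Lemma eval_orS {A : eqType} e (F : A -> bexp) s : eval e (orS F s) <-> exists y, y \in s /\ eval e (F y).
Proof.
elim: s => [|y s IH] /=; first by split=> // [[y []]].
rewrite IH; split.
  case=> [h|[z [zs h]]]; first by exists y; rewrite inE eqxx.
  by exists z; rewrite inE zs orbT.
move=> [z [+ h]]; rewrite inE => /orP[/eqP <-|zs]; first by left.
by right; exists z.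
Qed.

Lemma wf_orS {A : eqType} n (F : A -> bexp) s : (forall y, wf n (F y)) -> wf n (orS F s).
Proof. by move=> h; elim: s => //= y s IH. Qed.

Fixpoint exclB (y : V) (ts : seq (nat * (V -> V))) : bexp :=
  match ts with [::] => BT
  | p :: ts => BC (BN (BA p.1 (p.2 @^-1` [set y]))) (exclB y ts) end.

Lemma eval_exclB e y ts : eval e (exclB y ts) <-> excl y e ts.
Proof.
elim: ts => [|[j g] ts IH] //=; rewrite IH /preimage /set1 /=.
by split=> -[h1 h2]; split=> // E; apply: h1; rewrite E.
Qed.

Lemma wf_exclB n y ts : wfts n ts -> wf n (exclB y ts).
Proof.
elim: ts => [|[j g] ts IH] //= [[hj [mg _]] /IH h]; split=> //; split=> //.
exact: pre_meas mg (meas_set1 y).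
Qed.

Lemma excl_notin x e ts : x \notin [seq p.2 (e p.1) | p <- ts] -> excl x e ts.
Proof.
elim: ts => [|[j g] ts IH] //=; rewrite inE negb_or => /andP[h1 h2].
by split; [move=> E; move: h1; rewrite E eqxx | exact: IH].
Qed.

Lemma fill (B : set V) m : (exists s : seq V, [/\ uniq s, size s = m & forall y, y \in s -> B y])
  \/ (exists s : seq V, forall y, B y <-> y \in s).
Proof.
elim: m => [|m [[s [us ss sB]]|h]]; last by right.
  by left; exists [::].
case: (classic (exists y, B y /\ y \notin s)) => [[y [By ys]]|h].
  left; exists (y :: s); split=> /=; first by rewrite ys.
    by rewrite ss.
  by move=> z; rewrite inE => /orP[/eqP ->|/sB].
right; exists s => y; split; last exact: sB.
move=> By; apply: contrapT => ys; apply: h; exists y; split=> //.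
by apply/negP.
Qed.

Lemma base (B : set V) n ts : measurable B -> wfts n ts ->
  exists b, wf n b /\ forall e, (exists x, excl x e ts /\ B x) <-> eval e b.
Proof.
move=> mB wts; have [[s [us ss sB]]|[s hs]] := fill B (size ts).+1.
  exists BT; split=> // e; split=> // _.
  have [y [ys yl]] : exists y, y \in s /\ y \notin [seq p.2 (e p.1) | p <- ts].
    apply: contrapT => h.
    have sub : {subset s <= [seq p.2 (e p.1) | p <- ts]}.
      move=> y ys; apply: contrapT => /negP yl; apply: h; by exists y.
    by have := uniq_leq_size us sub; rewrite size_map ss ltnn.
  by exists y; split; [exact: excl_notin | exact: sB].
exists (orS (fun y => exclB y ts) s); split.
  by apply: wf_orS => y; exact: wf_exclB.
move=> e; rewrite eval_orS; split.
  by move=> [x [ex Bx]]; exists x; split; [rewrite -hs | rewrite eval_exclB].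
by move=> [x [xs ex]]; exists x; split; [rewrite -eval_exclB | rewrite hs].
Qed.

Lemma substT t n j g : wfT n t -> (j < n)%N -> Wf g ->
  exists b, wf n b /\ forall e, evalT (g (e j)) e t <-> eval e b.
Proof.
move=> + hj wg; elim: t => [B|c t1 IH1 t2 IH2|j' g' t1 IH1 t2 IH2] /=.
- move=> mB; exists (BA j (g @^-1` B)); split=> //; split=> //.
  exact: pre_meas (proj1 wg) mB.
- case=> wc /IH1 [b1 [w1 h1]] /IH2 [b2 [w2 h2]].
  exists (BD (BC c b1) (BC (BN c) b2)); split=> //= e.
  by rewrite h1 h2.
- case=> hj' wg' /IH1 [b1 [w1 h1]] /IH2 [b2 [w2 h2]].
  exists (BD (BC (BE j j' g g') b1) (BC (BN (BE j j' g g')) b2)); split=> //= e.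
  by rewrite h1 h2.
Qed.

Fixpoint exclE j g (ts : seq (nat * (V -> V))) : bexp :=
  match ts with [::] => BT
  | p :: ts => BC (BN (BE j p.1 g p.2)) (exclE j g ts) end.

Lemma eval_exclE e j g ts : eval e (exclE j g ts) <-> excl (g (e j)) e ts.
Proof. by elim: ts => [|[j' g'] ts IH] //=; rewrite IH. Qed.

Lemma wf_exclE n j g ts : (j < n)%N -> Wf g -> wfts n ts -> wf n (exclE j g ts).
Proof. by move=> hj wg; elim: ts => [|[j' g'] ts IH] //= [[? ?] /IH]. Qed.

Lemma elimT t : forall n ts, wfT n t -> wfts n ts ->
  exists b, wf n b /\ forall e, (exists x, excl x e ts /\ evalT x e t) <-> eval e b.
Proof.
elim: t => [B|c t1 IH1 t2 IH2|j g t1 IH1 t2 IH2] n ts /=.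
- by move=> mB wts; exact: base.
- case=> wc w1 w2 wts.
  have [b1 [wb1 h1]] := IH1 n ts w1 wts; have [b2 [wb2 h2]] := IH2 n ts w2 wts.
  exists (BD (BC c b1) (BC (BN c) b2)); split=> //= e.
  rewrite -h1 -h2; split.
    move=> [x [ex [[hc T1]|[hc T2]]]]; [left|right]; split=> //; by exists x.
  case=> -[hc [x [ex T]]]; exists x; split=> //; tauto.
- case=> hj wg w1 w2 wts.
  have [b1 [wb1 h1]] := substT w1 hj wg.
  have [b2 [wb2 h2]] := IH2 n ((j, g) :: ts) w2 (conj (conj hj wg) wts).
  exists (BD (BC (exclE j g ts) b1) b2); split.
    by split=> //; split=> //; exact: wf_exclE.
  move=> e /=; rewrite -h1 -h2 eval_exclE /=; split.
    move=> [x [ex [[hx T1]|[hx T2]]]].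
      by left; subst x; split.
    by right; exists x.
  case=> [[ex T1]|[x [[hx ex] T2]]]; first by exists (g (e j)); split=> //; left.
  by exists x; split=> //; right.
Qed.

End Core.

Section Graph.
Variables (d : measure_display) (V : measurableType d).
Variables (k : nat) (T : 'I_k -> V -> V).
Hypothesis hT : forall j, Wf (T j).
Hypothesis hsep : exists S : nat -> nat -> set V,
  (forall m r, measurable (S m r)) /\
  forall x y, (forall m r, S m r x -> S m r y) -> x = y.

Lemma onth_nthE (env : seq V) i : (i < size env)%N -> onth env i = Some (nth point env i).
Proof. by move=> hi; rewrite onthE (nth_map point). Qed.

Lemma nth_cons_scons (x : V) env : nth point (x :: env) = scons x (nth point env).
Proof. by apply: funext => -[|i]. Qed.

Lemma main_formula phi : forall n, fv_below phi n -> exists b, wf n b /\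
  forall env : seq V, size env = n ->
    (sat (graphing_adj T) env phi <-> eval (nth point env) b).
Proof.
elim: phi => [||i j|i j|g IH|g1 IH1 g2 IH2|g1 IH1 g2 IH2|g1 IH1 g2 IH2|g IH|g IH] n /=.
- by move=> _; exists (BT V).
- by move=> _; exists (BF V).
- move=> /andP[hi hj]; exists (BE i j id id); split; first by split=> //; exact: Wf_id.
  by move=> env se; rewrite !onth_nthE ?se.
- move=> /andP[hi hj].
  exists (BC (BN (BE i j id id)) (orS (fun j0 => BE i j (T j0) id) (enum 'I_k))).
  split.
    split; first by split=> //; exact: Wf_id.
    by apply: wf_orS => j0; split; [done|done|exact: hT|exact: Wf_id].
  move=> env se; rewrite !onth_nthE ?se // /graphing_adj /= eval_orS.
  split=> -[h1 h2]; split=> //.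
    by case: h2 => j0 h; exists j0; rewrite mem_enum.
  by case: h2 => j0 [_ h]; exists j0.
- by move=> /IH [b [wb hb]]; exists (BN b); split=> // env se; rewrite hb.
- move=> /andP[/IH1 [b1 [w1 h1]] /IH2 [b2 [w2 h2]]]; exists (BC b1 b2); split=> // env se.
  by rewrite h1 // h2.
- move=> /andP[/IH1 [b1 [w1 h1]] /IH2 [b2 [w2 h2]]]; exists (BD b1 b2); split=> // env se.
  by rewrite h1 // h2.
- move=> /andP[/IH1 [b1 [w1 h1]] /IH2 [b2 [w2 h2]]]; exists (BD (BN b1) b2); split=> // env se.
  rewrite h1 // h2 //=; split; last by case.
  by move=> h; case: (classic (eval (nth point env) b1)); auto.
- move=> /IH [b [wb hb]].
  have [t [wt ht]] := toTree hsep wb.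
  have [b' [wb' hb']] := @elimT _ _ hsep t n [::] wt I.
  exists b'; split=> // env se; rewrite -hb'; split.
    by move=> [x hx]; exists x; split=> //; rewrite -ht -nth_cons_scons -hb //= se.
  by move=> [x [_ hx]]; exists x; rewrite hb /= ?se // nth_cons_scons ht.
- move=> /IH [b [wb hb]].
  have [t [wt ht]] := @toTree _ _ hsep (BN b) n wb.
  have [b' [wb' hb']] := @elimT _ _ hsep t n [::] wt I.
  exists (BN b'); split=> // env se; rewrite /= -hb'; split.
    by move=> h [x [_ hx]]; move: hx; rewrite -ht /= -nth_cons_scons -hb /= ?se.
  move=> h x; apply: contrapT => hx; apply: h; exists x; split=> //.
  by rewrite -ht /= -nth_cons_scons -hb /= ?se.
Qed.

End Graph.

Section Prod.
Variables (d : measure_display) (V : measurableType d) (p : nat).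
Hypothesis hsep : exists S : nat -> nat -> set V,
  (forall m r, measurable (S m r)) /\
  forall x y, (forall m r, S m r x -> S m r y) -> x = y.

Let C : set (set ('I_p -> V)) := [set S | exists (i : 'I_p) (A : set V),
                 measurable A /\ S = [set v | A (v i)]].
Let M := g_sigma_algebraType C.

Lemma nth_env (v : 'I_p -> V) i (hi : (i < p)%N) :
  nth point [seq v i | i <- enum 'I_p] i = v (Ordinal hi).
Proof.
rewrite (nth_map (Ordinal hi)) ?size_enum_ord //; congr v.
by apply: val_inj => /=; rewrite nth_enum_ord.
Qed.

Lemma cyl (i : 'I_p) (A : set V) : measurable A -> measurable ([set v | A (v i)] : set M).
Proof. by move=> mA; apply: sub_sigma_algebra; exists i, A. Qed.

Lemma prod_meas b : wf p b ->
  measurable ([set v | eval (fun i => nth point [seq v i | i <- enum 'I_p] i) b] : set M).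
Proof.
elim: b => [||i A|i j f g|b IH|b1 IH1 b2 IH2|b1 IH1 b2 IH2] /=.
- by move=> _; exact: measurableT.
- by move=> _; exact: measurable0.
- move=> [hi mA].
  have -> : [set v : M | A (nth point [seq v i | i <- enum 'I_p] i)] =
            [set v | A (v (Ordinal hi))].
    by apply/seteqP; split=> v /=; rewrite nth_env.
  exact: cyl.
- case=> hi hj [mf _] [mg _]; have [S [mS sep]] := hsep.
  have -> : [set v : M | f (nth point [seq v i | i <- enum 'I_p] i) =
                     g (nth point [seq v i | i <- enum 'I_p] j)] =
    \bigcap_m \bigcap_r (~` [set v | (f @^-1` S m r) (v (Ordinal hi))] `|`
                        [set v | (g @^-1` S m r) (v (Ordinal hj))]).
    apply/seteqP; split=> v /=; rewrite !nth_env.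
      move=> e m _ r _ /=; rewrite /preimage /= e.
      by case: (classic (S m r (g (v (Ordinal hj))))) => h; [right|left].
    move=> h; apply: sep => m r hs; have := h m I r I; case=> //.
  apply: bigcapT_measurable => m; apply: bigcapT_measurable => r.
  by apply: measurableU; [apply: measurableC|]; apply: cyl; apply: pre_meas.
- by move=> /IH h; exact: measurableC.
- by case=> /IH1 h1 /IH2 h2; exact: measurableI.
- by case=> /IH1 h1 /IH2 h2; exact: measurableU.
Qed.

End Prod.

From mathcomp Require Import lra.
Import Num.Theory GRing.Theory Order.TTheory.
Local Open Scope ring_scope.

Lemma sep_of_std (R : realType) (d : measure_display) (V : measurableType d) :
  standard_borel R V -> exists S : nat -> nat -> set V,
  (forall m r, measurable (S m r)) /\
  forall x y, (forall m r, S m r x -> S m r y) -> x = y.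
Proof.
move=> [dist [[d0 d_eq d_sym d_tri] _ [D [cD dD]] hmeas]].
have [f finj] := countable_injP _ cD.
pose rho (r : nat) : R := (r.+1%:R)^-1.
have rho_gt0 r : (0 < rho r)%R by rewrite /rho invr_gt0 ltr0n.
exists (fun m r => [set z | exists y, D y /\ f y = m /\ (dist y z < rho r)%R]); split.
  move=> m r; case: (classic (exists y, D y /\ f y = m)) => [[y [Dy fy]]|hn].
    have -> : [set z | exists y, D y /\ f y = m /\ (dist y z < rho r)%R] =
              [set z | (dist y z < rho r)%R].
      apply/seteqP; split=> z /=.
        move=> [y' [Dy' [fy' h]]]; have <- // : y' = y.
        by apply: finj; rewrite ?in_setE // fy fy'.
      by move=> h; exists y.
    apply/hmeas; apply: sub_sigma_algebra => z /= hz.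
    exists (rho r - dist y z)%R; first by rewrite subr_gt0.
    move=> w /= hw; have := d_tri y z w; lra.
  have -> : [set z | exists y, D y /\ f y = m /\ (dist y z < rho r)%R] = set0.
    by apply/seteqP; split=> z //= [y [Dy [fy _]]]; apply: hn; exists y.
  exact: measurable0.
move=> x y h; apply: contrapT => hxy.
have dpos : (0 < dist x y)%R.
  by rewrite lt0r d0 andbT; apply/eqP => /d_eq.
have := @archi_boundP R (2 / dist x y)%R; set n := Num.Def.archi_bound _.
move=> /(_ _); rewrite divr_ge0 ?ltW // => /(_ isT) hn.
have hr : (rho n < dist x y / 2)%R.
  rewrite /rho; have n1 : (0 < n.+1%:R :> R)%R by rewrite ltr0n.
  have h2 : 0 < dist x y / 2 by rewrite divr_gt0.
  have -> : dist x y / 2 = (2 / dist x y)^-1 by rewrite invf_div.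
  rewrite ltf_pV2 ?posrE ?divr_gt0 //.
  have : (n%:R < n.+1%:R :> R)%R by rewrite ltr_nat.
  lra.
have [z [Dz hz]] := dD x (rho n) (rho_gt0 n).
have := h (f z) n; case.
  by exists z; split=> //; split=> //; rewrite d_sym.
move=> z' [Dz' [fz' hz']]; have ezz : z' = z.
  by apply: finj; rewrite ?in_setE.
subst z'; have := d_tri x z y; lra.
Qed.

Theorem lemma8p38 (R : realType) (d : measure_display) (V : measurableType d)
  (mu : probability V R) (k : nat) (T : 'I_k -> V -> V) :
  standard_borel R V ->
  (forall j, measure_preserving_involution mu (T j)) ->
  relational_sample_space R (graphing_adj T) /\
  modeling (graphing_adj T) mu.
Proof.
move=> hstd hT.
have hsep := sep_of_std hstd.
have hW : forall j, Wf (T j).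
  move=> j; have [mT invT _] := hT j; split=> //; exists (T j); split=> //.
have rss : relational_sample_space R (graphing_adj T).
  split=> // p phi hfv.
  have [b [wb hb]] := main_formula hW hsep hfv.
  have -> : @definable_set _ V (graphing_adj T) p phi =
     [set v | eval (fun i => nth point [seq v i | i <- enum 'I_p] i) b].
    apply/seteqP; split=> v /=; rewrite /definable_set /= hb //;
      by rewrite size_map size_enum_ord.
  exact: (prod_meas hsep wb).
by split.
Qed.
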